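(* Consider an execution of the PermitBFT protocol during a phase of synchronous operation. If round $i$ is unified and its creator $u=v_{i\bmod n}$ is honest, then $u$ creates a block or issues a proposal in round $i$.
   Context: PermitBFT protocol. There are $n$ nodes $v_0,\dots,v_{n-1}$; exactly $f<n/3$ are byzantine, the remaining $n-f$ are honest and follow the protocol. A position is a finite set of blocks. A permit is a signed tuple $(r,p)$. A proof for $(r,p)$ is a set of $2f+1$ permits for $(r,p)$ from distinct nodes. A block of round $r$ is signed by the creator $v_{r\bmod n}$ and contains a proof for $(r,p)$. A proposal of round $r$ is a position together with at least $2f+1$ round-$r$ permits from distinct nodes. Honest node: round $:=0$, current $:=\{\text{genesis}\}$; each round with $c=\text{round}\bmod n$: (1) send permit (round, current) to $v_c$; (2) if it is $v_c$: start the creator timeout; once $2f+1$ permits of this round for one position $p$ are held, broadcast a block with this proof at $p$ and stop; if the creator timeout expires first, broadcast a proposal if at least $2f+1$ permits of this round are held, and stop; also stop upon receiving a block, proposal or $2f+1$ timeout messages of a later round; (3) repeat: upon receiving a block or proposal of a round $r'\ge$ round, set round $:=r'$ and current accordingly and go to (4); when the round timeout expires, broadcast timeout(round); if holding $2f+1$ timeout messages for some round $\ge$ round, jump to the largest such round, forward them, go to (4); (4) round $:=$ round$+1$. Synchronous operation: every message between honest nodes is delivered within a known bound $\Delta$, local timers are reliable, local computation takes no time, and $2\Delta<\text{creator timeout}<3\Delta$, $5\Delta<\text{round timeout}$. Let $r_{\max}(t)$ be the maximum round-variable value over honest nodes at time $t$; round $i$ starts at $T_i=\min\{t: r_{\max}(t)\ge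 i\}$; round $i$ is unified if all honest nodes start executing round $i$ within $[T_i,T_i+\Delta]$. *)

(* Defs.v *)
(* An operational model of PermitBFT executions.
   - Nodes are the naturals 0 .. n-1; node v_c is c; the creator of
     round r is (r %% n).
   - Byzantine nodes are given by a boolean predicate [byz] (restricted to
     0 .. n-1); exactly f of them.
   - An execution is an infinite sequence of events [ev k] with
     non-decreasing real time stamps [tm k].  Honest nodes are deterministic
     state machines ([hstep]) reacting to their inputs (start, message
     delivery, timer expiry); local computation takes no time.
   - Signatures are modelled by the Dolev-Yao style restriction that a
     byzantine node may only use an honestly-signed item (permit, timeout,
     block of an honest creator) if it was previously sent to some byzantine
     node (inside some message).
   - Synchronous operation from time t0 on: messages between honest nodes
     sent at a time >= t0 are delivered within delta, and timers set at a
     time >= t0 expire exactly after their duration. *)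
From Stdlib Require Import Reals.
From mathcomp Require Import all_boot.

Inductive msg (Pos : Type) : Type :=
| MPermit (s r : nat) (p : Pos)               (* permit (r,p) signed by s *)
| MBlock (r : nat) (p : Pos) (pf : seq nat)   (* block of round r at p,
                                 signed by r %% n, proof = permits (r,p)
                                 from the nodes in pf *)
| MProposal (r : nat) (p : Pos) (ps : seq (nat * Pos))
                             (* proposal: position p together with the
                                round-r permits (r, q) signed by s for
                                (s, q) in ps *)
| MTimeout (s r : nat).                        (* timeout(r) signed by s *)
Arguments MPermit {Pos}.
Arguments MBlock {Pos}.
Arguments MProposal {Pos}.
Arguments MTimeout {Pos}.

(* signed items (for the unforgeability of signatures) *)
Inductive atom (Pos : Type) : Type :=
| APermit (s r : nat) (p : Pos)
| ABlock (r : nat) (p : Pos) (pf : seq nat)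
| ATimeout (s r : nat).
Arguments APermit {Pos}.
Arguments ABlock {Pos}.
Arguments ATimeout {Pos}.

Definition atoms {Pos : Type} (m : msg Pos) : seq (atom Pos) :=
  match m with
  | MPermit s r p => [:: APermit s r p]
  | MBlock r p pf => ABlock r p pf :: [seq APermit s r p | s <- pf]
  | MProposal r p ps => [seq APermit x.1 r x.2 | x <- ps]
  | MTimeout s r => [:: ATimeout s r]
  end.

Definition signer {Pos : Type} (n : nat) (a : atom Pos) : nat :=
  match a with
  | APermit s _ _ => s
  | ABlock r _ _ => r %% n
  | ATimeout s _ => s
  end.

Inductive tid : Type := TCreator (r : nat) | TRound (r : nat).

Inductive input (Pos : Type) : Type :=
| IStart
| IRecv (m : msg Pos)
| IFire (t : tid).
Arguments IStart {Pos}.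
Arguments IRecv {Pos}.
Arguments IFire {Pos}.

Inductive event (Pos : Type) : Type :=
| EStart (v : nat)
| EDeliver (w : nat) (m : msg Pos)
| EFire (w : nat) (t : tid)
| EByz (b w : nat) (m : msg Pos).
Arguments EStart {Pos}.
Arguments EDeliver {Pos}.
Arguments EFire {Pos}.
Arguments EByz {Pos}.

Record hstate (Pos : Type) := HS {
  rnd : nat;
  cur : Pos;
  creating : bool;           (* executing step (2) as creator *)
  held : seq (msg Pos)
}.
Arguments HS {Pos}.
Arguments rnd {Pos}.
Arguments cur {Pos}.
Arguments creating {Pos}.
Arguments held {Pos}.

Record output (Pos : Type) := Out {
  o_sends : seq (nat * msg Pos);   (* (destination, message) *)
  o_timers : seq (tid * R);
  o_entered : seq nat              (* rounds started (step (1) executed) *)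
}.
Arguments Out {Pos}.
Arguments o_sends {Pos}.
Arguments o_timers {Pos}.
Arguments o_entered {Pos}.

Definition nout {Pos : Type} : output Pos := Out [::] [::] [::].
Definition ocat {Pos : Type} (o1 o2 : output Pos) : output Pos :=
  Out (o_sends o1 ++ o_sends o2) (o_timers o1 ++ o_timers o2)
      (o_entered o1 ++ o_entered o2).

Section Protocol.
Variables (n f : nat) (Pos : eqType) (genesis : Pos).
(* new current position after adopting a block (round, position, proof) *)
Variable blk_pos : nat -> Pos -> seq nat -> Pos.
(* position a creator puts in its proposal (from its current position and
   the round permits it holds) *)
Variable prop_pos : Pos -> seq (nat * Pos) -> Pos.
(* creator timeout and round timeout *)
Variables (ct rt : R).

Definition quorum : nat := (2 * f + 1)%N.

Definition permits_r (r : nat) (H : seq (msg Pos)) : seq (nat * Pos) :=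
  pmap (fun m => match m with
                 | MPermit s r' p => if (r' == r) && (s < n) then Some (s, p)
                                     else None
                 | _ => None end) H.

Definition signers_for (r : nat) (p : Pos) (H : seq (msg Pos)) : seq nat :=
  undup [seq x.1 | x <- permits_r r H & x.2 == p].

Definition all_signers (r : nat) (H : seq (msg Pos)) : seq nat :=
  undup [seq x.1 | x <- permits_r r H].

Definition quorum_pos (r : nat) (H : seq (msg Pos)) : option Pos :=
  ohead [seq x.2 | x <- permits_r r H &
                   (quorum <= size (signers_for r x.2 H))%N].

Definition to_signers (j : nat) (H : seq (msg Pos)) : seq nat :=
  undup (pmap (fun m => match m with
                        | MTimeout s j' => if (j' == j) && (s < n) then Some s
                                           else None
                        | _ => None end) H).

Definition to_rounds (H : seq (msg Pos)) : seq nat :=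
  pmap (fun m => match m with MTimeout _ j => Some j | _ => None end) H.

Definition tmax (H : seq (msg Pos)) : option nat :=
  let js := [seq j <- to_rounds H | (quorum <= size (to_signers j H))%N] in
  if js is [::] then None else Some (foldr maxn 0%N js).

Definition bcast (m : msg Pos) : seq (nat * msg Pos) :=
  [seq (w, m) | w <- iota 0 n].

Definition valid_block (pf : seq nat) : bool :=
  [&& uniq pf, size pf == quorum & all (fun s => s < n) pf].

Definition valid_prop (ps : seq (nat * Pos)) : bool :=
  (quorum <= size (undup [seq x.1 | x <- ps & x.1 < n]))%N.

Section Node.
Variable v : nat.

(* step (2): once 2f+1 permits of this round for one position are held,
   broadcast a block with this proof and stop *)
Definition creator_check (st : hstate Pos) : hstate Pos * output Pos :=
  if creating st then
    match quorum_pos (rnd st) (held st) with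
    | Some p =>
        (HS (rnd st) (cur st) false (held st),
         Out (bcast (MBlock (rnd st) p
                       (take quorum (signers_for (rnd st) p (held st)))))
             [::] [::])
    | None => (st, nout)
    end
  else (st, nout).

(* start executing round r with current position p: steps (1) and (2) *)
Definition enter1 (r : nat) (p : Pos) (st : hstate Pos)
  : hstate Pos * output Pos :=
  let isc := (r %% n == v) in
  let st1 := HS r p isc (held st) in
  let o1 := Out [:: (r %% n, MPermit v r p)]
                ((TRound r, rt) :: (if isc then [:: (TCreator r, ct)] else [::]))
                [:: r] in
  let (st2, o2) := creator_check st1 in (st2, ocat o1 o2).

(* timeout rule of step (3) (and the corresponding stop rule of step (2)):
   if 2f+1 timeout messages are held for some round >= round (> round when
   still in step (2)), jump to the largest such round, forward them, and
   start the next round *)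
Definition settle (st : hstate Pos) : hstate Pos * output Pos :=
  match tmax (held st) with
  | Some J =>
      if (if creating st then rnd st < J else rnd st <= J)%N then
        let fw := flatten [seq bcast (MTimeout s J)
                          | s <- take quorum (to_signers J (held st))] in
        let (st', o) := enter1 J.+1 (cur st) st in
        (st', ocat (Out fw [::] [::]) o)
      else (st, nout)
  | None => (st, nout)
  end.

Definition enter (r : nat) (p : Pos) (st : hstate Pos)
  : hstate Pos * output Pos :=
  let (s1, o1) := enter1 r p st in
  let (s2, o2) := settle s1 in (s2, ocat o1 o2).

Definition after_settle (so : hstate Pos * output Pos)
  : hstate Pos * output Pos :=
  let (s1, o1) := so in
  let (s2, o2) := settle s1 in (s2, ocat o1 o2).

(* block / proposal of round r is a trigger: r >= round in step (3),
   r > round (a later round) in step (2) *)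
Definition trigger (st : hstate Pos) (r : nat) : bool :=
  if creating st then (rnd st < r)%N else (rnd st <= r)%N.

Definition hstep (st : hstate Pos) (i : input Pos)
  : hstate Pos * output Pos :=
  match i with
  | IStart => enter 0 genesis st
  | IRecv m =>
      let st0 := HS (rnd st) (cur st) (creating st) (m :: held st) in
      match m with
      | MPermit _ _ _ => after_settle (creator_check st0)
      | MBlock r p pf =>
          if valid_block pf && trigger st r
          then enter r.+1 (blk_pos r p pf) st0   (* round := r; go to (4) *)
          else settle st0
      | MProposal r p ps =>
          if valid_prop ps && trigger st r
          then enter r.+1 p st0
          else settle st0
      | MTimeout _ _ => settle st0
      end
  | IFire (TCreator r) =>
      if creating st && (r == rnd st) then
        let ps := permits_r (rnd st) (held st) in
        let o := if (quorum <= size (all_signers (rnd st) (held st)))%N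
                 then bcast (MProposal (rnd st) (prop_pos (cur st) ps) ps)
                 else [::] in
        after_settle (HS (rnd st) (cur st) false (held st), Out o [::] [::])
      else (st, nout)
  | IFire (TRound r) =>
      if r == rnd st then (st, Out (bcast (MTimeout v r)) [::] [::])
      else (st, nout)
  end.

End Node.

Local Open Scope R_scope.

Variable byz : nat -> bool.
Variables (delta t0 : R).
Variable ev : nat -> event Pos.
Variable tm : nat -> R.

Definition honest (v : nat) : bool := (v < n)%N && ~~ byz v.
Definition byzantine (v : nat) : bool := (v < n)%N && byz v.

Definition input_of (v : nat) (e : event Pos) : option (input Pos) :=
  match e with
  | EStart w => if w == v then Some IStart else None
  | EDeliver w m => if w == v then Some (IRecv m) else None
  | EFire w t => if w == v then Some (IFire t) else None
  | EByz _ _ _ => None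
  end.

(* state of node v before processing event k *)
Fixpoint hrun (v k : nat) : hstate Pos :=
  match k with
  | 0 => HS 0 genesis false [::]
  | k'.+1 => match input_of v (ev k') with
             | Some i => (hstep v (hrun v k') i).1
             | None => hrun v k'
             end
  end.

Definition hout (v k : nat) : output Pos :=
  match input_of v (ev k) with
  | Some i => (hstep v (hrun v k) i).2
  | None => nout
  end.

Definition sends_at (k w : nat) (m : msg Pos) : Prop :=
  (exists v, honest v /\ List.In (w, m) (o_sends (hout v k)))
  \/ (exists b, ev k = EByz b w m).

(* the adversary knows the signed item a before event k *)
Definition knows_before (k : nat) (a : atom Pos) : Prop :=
  exists k' w m, (k' < k)%N /\ byzantine w /\ sends_at k' w m
                 /\ List.In a (atoms m).

Definition valid_exec : Prop :=
  (forall k, (tm k <= tm k.+1)) /\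
  (forall T, exists k, (T < tm k)) /\
  (forall k, (k < n)%N -> ev k = EStart k /\ tm k = 0) /\
  (forall k v, ev k = EStart v -> (k < n)%N) /\
  (forall k w m, ev k = EDeliver w m ->
     honest w /\ exists k', (k' < k)%N /\ sends_at k' w m) /\
  (forall k w t, ev k = EFire w t ->
     honest w /\ exists k' d, (k' < k)%N /\ List.In (t, d) (o_timers (hout w k'))
                            /\ ((t0 <= tm k') -> tm k = (tm k' + d))) /\
  (forall k w t d, honest w -> List.In (t, d) (o_timers (hout w k)) ->
     (t0 <= tm k) ->
     exists k', (k < k')%N /\ ev k' = EFire w t /\ tm k' = (tm k + d)) /\
  (forall k v w m, honest v -> honest w -> List.In (w, m) (o_sends (hout v k)) ->
     (t0 <= tm k) ->
     exists k', (k < k')%N /\ ev k' = EDeliver w m /\ (tm k' <= tm k + delta)) /\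
  (* byzantine nodes cannot forge honest signatures *)
  (forall k b w m, ev k = EByz b w m ->
     byzantine b /\ forall a, List.In a (atoms m) -> honest (signer n a) ->
                   knows_before k a).

Definition round_at (v : nat) (t : R) (r : nat) : Prop :=
  exists k, (forall j, (j < k)%N -> (tm j <= t)) /\ (t < tm k)
            /\ rnd (hrun v k) = r.

Definition rmax_ge (t : R) (i : nat) : Prop :=
  exists v r, honest v /\ round_at v t r /\ (i <= r)%N.

Definition round_start (i : nat) (T : R) : Prop :=
  (0 <= T) /\ rmax_ge T i /\
  forall t, (0 <= t) -> rmax_ge t i -> (T <= t).

Definition starts_exec (v i : nat) (t : R) : Prop :=
  exists k, tm k = t /\ List.In i (o_entered (hout v k)).

Definition unified (i : nat) : Prop :=
  exists T, round_start i T /\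
    forall v, honest v ->
      exists t, (T <= t) /\ (t <= T + delta) /\ starts_exec v i t.

Definition is_bp_of (i : nat) (m : msg Pos) : bool :=
  match m with
  | MBlock r _ _ => r == i
  | MProposal r _ _ => r == i
  | _ => false
  end.

Definition creates_or_proposes (u i : nat) : Prop :=
  exists k w m, List.In (w, m) (o_sends (hout u k)) /\ is_bp_of i m.

End Protocol.

(* Main.v *)
Require Import Defs.
From Stdlib Require Import Reals Lra Classical.
From mathcomp Require Import all_boot zify.

Lemma In_cat {T : Type} (x : T) s1 s2 : List.In x (s1 ++ s2) <-> List.In x s1 \/ List.In x s2.
Proof. elim: s1 => [|a s IH] /=; [tauto|]. rewrite IH; tauto. Qed.

Lemma In_map {A B : Type} (g : A -> B) y s : List.In y (map g s) <-> exists x, g x = y /\ List.In x s.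
Proof.
elim: s => [|a s IH] /=; first by split => // -[x []].
rewrite IH; split.
- case=> [<-|[x [<- H]]]; [by exists a; auto | by exists x; auto].
- case=> x [<- [->|H]]; [by left | by right; exists x].
Qed.

Lemma In_flatten {T : Type} (x : T) ss : List.In x (flatten ss) <-> exists s, List.In s ss /\ List.In x s.
Proof.
elim: ss => [|a ss IH] /=; first by split => // -[s []].
rewrite In_cat IH; split.
- case=> [H|[s [H1 H2]]]; [by exists a; auto | by exists s; auto].
- case=> s [[<-|H1] H2]; [by left | by right; exists s].
Qed.

Lemma foldr_maxn_mem (js : seq nat) : js != [::] -> foldr maxn 0 js \in js.
Proof.
elim: js => [|a js IH] //= _.
have Hm : forall x, maxn a x = a \/ maxn a x = x.
  by move=> x; case: (leqP a x); auto.
case: js IH => [|b js] IH /=; first by rewrite maxn0 inE.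
have /(_ isT) HM := IH.
case: (Hm (maxn b (foldr maxn 0 js))) => ->; first by rewrite inE eqxx.
by rewrite inE HM orbT.
Qed.

Section Lists.
Variables (n f : nat) (Pos : eqType).

Lemma permits_rP r (H : seq (msg Pos)) s p :
  (s, p) \in permits_r n Pos r H -> List.In (MPermit s r p) H /\ s < n.
Proof.
elim: H => [|m H IH] //=.
rewrite /permits_r /=.
case: m => [s' r' p'|r' p' pf|r' p' ps|s' r'] /=; try by move=> /IH [? ?]; auto.
case: ifP => [/andP [/eqP -> Hs]|_]; last by move=> /IH [? ?]; auto.
rewrite inE => /orP [/eqP [-> ->]|/IH [? ?]]; auto.
Qed.

Lemma permits_rI r (H : seq (msg Pos)) s p :
  List.In (MPermit s r p) H -> s < n -> (s, p) \in permits_r n Pos r H.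
Proof.
elim: H => [|m H IH] //= Hin Hs.
rewrite /permits_r /=.
case: Hin => [->|Hin]; first by rewrite /= eqxx Hs /= inE eqxx.
case: m => [s' r' p'|r' p' pf|r' p' ps|s' r'] /=; try by apply: IH.
case: ifP => _; last by apply: IH.
by rewrite inE (IH Hin Hs) orbT.
Qed.

Lemma to_signersP J (H : seq (msg Pos)) s :
  s \in to_signers n Pos J H -> List.In (MTimeout s J) H /\ s < n.
Proof.
rewrite /to_signers mem_undup.
elim: H => [|m H IH] //=.
case: m => [s' r' p'|r' p' pf|r' p' ps|s' r'] /=; try by move=> /IH [? ?]; auto.
case: ifP => [/andP [/eqP -> Hs]|_]; last by move=> /IH [? ?]; auto.
rewrite inE => /orP [/eqP ->|/IH [? ?]]; auto.
Qed.

Lemma tmaxP (H : seq (msg Pos)) J :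
  tmax n f Pos H = Some J -> quorum f <= size (to_signers n Pos J H).
Proof.
rewrite /tmax.
set js := filter _ _.
case E: js => [|a l] // [<-].
have : foldr maxn 0 (a :: l) \in js by rewrite E; apply: foldr_maxn_mem.
by rewrite mem_filter => /andP [].
Qed.

End Lists.
Arguments permits_rP {n Pos r H s p}.
Arguments permits_rI {n Pos r H s p}.
Arguments to_signersP {n Pos J H s}.
Arguments tmaxP {n f Pos H J}.
Lemma In_memP {T : eqType} (x : T) s : List.In x s <-> x \in s.
Proof. elim: s => [|a s IH] //=; rewrite inE IH; split; [case=> [->|->]; rewrite ?eqxx ?orbT // | case/orP => [/eqP ->|]]; auto. Qed.

Section Step.
Variables (n f : nat) (Pos : eqType) (genesis : Pos)
  (blk_pos : nat -> Pos -> seq nat -> Pos)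
  (prop_pos : Pos -> seq (nat * Pos) -> Pos) (ct rt : R) (v : nat).
Hypothesis n_gt0 : 0 < n.

Local Notation cc := (creator_check n f Pos).
Local Notation e1 := (enter1 n f Pos ct rt v).
Local Notation stl := (settle n f Pos ct rt v).
Local Notation hs := (hstep n f Pos genesis blk_pos prop_pos ct rt v).

Definition SendOK (H : seq (msg Pos)) (o : output Pos) (w : nat) (m : msg Pos) : Prop :=
 (exists r p, m = MPermit v r p /\ w = r %% n /\ List.In r (o_entered o)) \/
 (exists r p pf, m = MBlock r p pf /\ forall s, s \in pf -> List.In (MPermit s r p) H) \/
 (exists r p ps, m = MProposal r p ps /\ forall x, x \in ps -> List.In (MPermit x.1 r x.2) H) \/
 (exists s J, m = MTimeout s J /\ List.In (MTimeout s J) H).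

Definition TimOK (o : output Pos) (t : tid) (d : R) : Prop :=
  match t with
  | TRound r => d = rt /\ List.In r (o_entered o)
  | TCreator r => d = ct /\ List.In r (o_entered o)
  end.

Definition OK (H : seq (msg Pos)) (o : output Pos) : Prop :=
  (forall w m, List.In (w, m) (o_sends o) -> SendOK H o w m) /\
  (forall t d, List.In (t, d) (o_timers o) -> TimOK o t d) /\
  (forall r, List.In r (o_entered o) -> (exists p, List.In (r %% n, MPermit v r p) (o_sends o)) /\
     (r %% n = v -> List.In (TCreator r, ct) (o_timers o))).

Lemma SendOK_mono H o o' w m : (forall r, List.In r (o_entered o) -> List.In r (o_entered o')) ->
  SendOK H o w m -> SendOK H o' w m.
Proof.
move=> Hsub [[r [p [-> [-> Hr]]]]|HH]; last by right.
by left; exists r, p; auto.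
Qed.

Lemma TimOK_mono o o' t d : (forall r, List.In r (o_entered o) -> List.In r (o_entered o')) ->
  TimOK o t d -> TimOK o' t d.
Proof. by case: t => r /= Hsub [? ?]; auto. Qed.

Lemma OK_cat H o1 o2 : OK H o1 -> OK H o2 -> OK H (ocat o1 o2).
Proof.
move=> [S1 [T1 E1]] [S2 [T2 E2]]; split; [|split] => /=.
- move=> w m /In_cat [] Hin; [apply: SendOK_mono (S1 _ _ Hin) | apply: SendOK_mono (S2 _ _ Hin)];
  by move=> r Hr /=; apply/In_cat; auto.
- move=> t d /In_cat [] Hin; [apply: TimOK_mono (T1 _ _ Hin) | apply: TimOK_mono (T2 _ _ Hin)];
  by move=> r Hr /=; apply/In_cat; auto.
- move=> r /In_cat [] Hin.
  + case: (E1 _ Hin) => [[p Hp] Ht]; split; [exists p; apply/In_cat; auto | move=> Hv; apply/In_cat; auto].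
  + case: (E2 _ Hin) => [[p Hp] Ht]; split; [exists p; apply/In_cat; auto | move=> Hv; apply/In_cat; auto].
Qed.

Lemma OK_nout H : OK H nout.
Proof. by split; [|split]. Qed.

Lemma In_bcast w m m' : List.In (w, m') (bcast n Pos m) -> m' = m.
Proof. by rewrite /bcast => /In_map [x [[_ ->]]]. Qed.

Lemma bcast_ne m : List.In (0%N, m) (bcast n Pos m).
Proof.
rewrite /bcast; apply/In_map; exists 0%N; split => //.
case: n n_gt0 => // k _ /=; by left.
Qed.

Lemma cc_held st : held (cc st).1 = held st.
Proof. rewrite /creator_check; case: (creating st) => //; by case: quorum_pos. Qed.

Lemma cc_rnd st : rnd (cc st).1 = rnd st.
Proof. rewrite /creator_check; case: (creating st) => //; by case: quorum_pos. Qed.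

Lemma cc_ent st : o_entered (cc st).2 = [::].
Proof. rewrite /creator_check; case: (creating st) => //; by case: quorum_pos. Qed.

Lemma cc_OK st : OK (held st) (cc st).2.
Proof.
rewrite /creator_check; case: (creating st); last exact: OK_nout.
case: quorum_pos => [p|]; last exact: OK_nout.
split; [|split] => //= w m /In_bcast ->.
right; left; do 3 eexists; split; first reflexivity.
move=> s /mem_take; rewrite /signers_for mem_undup => /mapP [[s' p'] ].
rewrite mem_filter /= => /andP [/eqP -> Hin] ->.
by case: (permits_rP Hin).
Qed.

Lemma cc_cases st : cc st = (st, nout) \/
  (creating st /\ (cc st).1 = HS (rnd st) (cur st) false (held st) /\
   exists w m, List.In (w, m) (o_sends (cc st).2) /\ is_bp_of Pos (rnd st) m).
Proof.
rewrite /creator_check; case E: (creating st); last by left.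
case: quorum_pos => [p|]; last by left.
right; split => //; split => //=.
by do 2 eexists; split; [apply: bcast_ne | rewrite /= eqxx].
Qed.

Lemma e1_eq r p st : e1 r p st =
  ((cc (HS r p (r %% n == v) (held st))).1,
   ocat (Out [:: (r %% n, MPermit v r p)]
             ((TRound r, rt) :: (if r %% n == v then [:: (TCreator r, ct)] else [::])) [:: r])
        (cc (HS r p (r %% n == v) (held st))).2).
Proof. by rewrite /enter1; case: (cc _). Qed.

Lemma e1_held r p st : held (e1 r p st).1 = held st.
Proof. by rewrite e1_eq cc_held. Qed.

Lemma e1_rnd r p st : rnd (e1 r p st).1 = r.
Proof. by rewrite e1_eq cc_rnd. Qed.

Lemma e1_ent r p st : o_entered (e1 r p st).2 = [:: r].
Proof. by rewrite e1_eq /= cc_ent. Qed.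

Lemma e1_OK r p st : OK (held st) (e1 r p st).2.
Proof.
rewrite e1_eq; apply: OK_cat; last exact: (cc_OK (HS _ _ _ _)).
split; [|split] => /=.
- move=> w m [[<- <-]|//]; left; do 2 eexists; split; [reflexivity|split; [reflexivity|by left]].
- move=> t d [[<- <-]|]; first by split; [|left].
  case: (r %% n == v) => // -[[<- <-]|//]; by split; [|left].
- move=> r' [<-|//]; split; first by exists p; left.
  by move=> ->; rewrite eqxx; right; left.
Qed.

Lemma e1_creat r p st : r %% n = v ->
  creating (e1 r p st).1 \/ exists w m, List.In (w, m) (o_sends (e1 r p st).2) /\ is_bp_of Pos r m.
Proof.
move=> Hv; rewrite e1_eq Hv eqxx.
case: (cc_cases (HS r p true (held st))) => [->|[_ [_ [w [m [Hin Hbp]]]]]]; first by left.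
right; exists w, m; split => //=; by right.
Qed.

Lemma ocat_ent (o1 o2 : output Pos) : o_entered (ocat o1 o2) = o_entered o1 ++ o_entered o2.
Proof. by []. Qed.
Lemma ocat_sends (o1 o2 : output Pos) : o_sends (ocat o1 o2) = o_sends o1 ++ o_sends o2.
Proof. by []. Qed.
Lemma ocat_tim (o1 o2 : output Pos) : o_timers (ocat o1 o2) = o_timers o1 ++ o_timers o2.
Proof. by []. Qed.

Lemma stl_cases st : stl st = (st, nout) \/
  exists J fw, tmax n f Pos (held st) = Some J /\
     (if creating st then rnd st < J else rnd st <= J) /\
     stl st = ((e1 J.+1 (cur st) st).1, ocat (Out fw [::] [::]) (e1 J.+1 (cur st) st).2) /\
     (forall w m, List.In (w, m) fw -> exists s, m = MTimeout s J /\ List.In (MTimeout s J) (held st)).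
Proof.
rewrite /settle; case E: tmax => [J|]; last by left.
case: ifP => HJ; last by left.
right; exists J; eexists; split => //; split => //.
split; first by case: (e1 _ _ _).
move=> w m /In_flatten [s [/In_map [s' [<- Hs']] Hin]].
rewrite (In_bcast _ _ _ Hin); exists s'; split => //.
have : s' \in to_signers n Pos J (held st).
  by apply: mem_take; apply/In_memP; exact: Hs'.
by case/to_signersP.
Qed.

Lemma stl_held st : held (stl st).1 = held st.
Proof. case: (stl_cases st) => [->|[J [fw [_ [_ [-> _]]]]]] //; exact: e1_held. Qed.

Lemma stl_OK st : OK (held st) (stl st).2.
Proof.
case: (stl_cases st) => [->|[J [fw [_ [_ [-> Hfw]]]]]] /=; first exact: OK_nout.
apply: OK_cat; last exact: e1_OK.
split; [|split] => //= w m /Hfw [s [-> Hs]].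
by right; right; right; exists s, J.
Qed.

Lemma stl_rnd st : rnd st <= rnd (stl st).1.
Proof.
case: (stl_cases st) => [->|[J [fw [_ [HJ [-> _]]]]]] //=.
rewrite e1_rnd; case: (creating st) HJ => H; lia.
Qed.

Definition Pig (hon : nat -> bool) : Prop :=
  forall l : seq nat, uniq l -> all (fun s => s < n) l -> quorum f <= size l -> exists2 s, s \in l & hon s.

Lemma stl_rnd_le hon i st : Pig hon ->
  (forall s J, List.In (MTimeout s J) (held st) -> hon s -> J < i) ->
  rnd st <= i -> rnd (stl st).1 <= i.
Proof.
move=> Hpig HT Hr.
case: (stl_cases st) => [->|[J [fw [EJ [_ [-> _]]]]]] //=; rewrite e1_rnd.
have [s Hs Hh] : exists2 s, s \in to_signers n Pos J (held st) & hon s.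
  apply: Hpig; [exact: undup_uniq | | exact: tmaxP EJ].
  by apply/allP => x /to_signersP [].
by case/to_signersP: Hs => Hin _; exact: HT Hin Hh.
Qed.

Definition aft := after_settle n f Pos ct rt v.

Lemma aft_eq s1 o1 : aft (s1, o1) = ((stl s1).1, ocat o1 (stl s1).2).
Proof. by rewrite /aft /after_settle; case: (stl s1). Qed.

Lemma aft_eq' so : aft so = ((stl so.1).1, ocat so.2 (stl so.1).2).
Proof. by case: so => s1 o1; rewrite aft_eq. Qed.

Lemma ent_eq r p st : enter n f Pos ct rt v r p st =
   ((stl (e1 r p st).1).1, ocat (e1 r p st).2 (stl (e1 r p st).1).2).
Proof. by rewrite /enter; case: (e1 r p st) => s1 o1 /=; case: (stl s1). Qed.

Definition EntLe (s : hstate Pos) (o : output Pos) := forall r, List.In r (o_entered o) -> r <= rnd s.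

Lemma AS_EntLe s1 o1 : EntLe s1 o1 -> EntLe (stl s1).1 (ocat o1 (stl s1).2).
Proof.
move=> H r /= /In_cat [Hr|Hr]; first exact: leq_trans (H _ Hr) (stl_rnd _).
case: (stl_cases s1) => [E|[J [fw [_ [_ [E _]]]]]]; rewrite E in Hr *; first by rewrite /= in Hr.
move: Hr; rewrite ocat_ent In_cat e1_ent e1_rnd => -[//|[<-|//]] //.
Qed.

Definition Ent8 (s : hstate Pos) (o : output Pos) := forall r, List.In r (o_entered o) ->
  r = rnd s -> r %% n = v -> creating s \/ exists w m, List.In (w, m) (o_sends o) /\ is_bp_of Pos r m.

Lemma AS_Ent8 s1 o1 : EntLe s1 o1 -> Ent8 s1 o1 -> Ent8 (stl s1).1 (ocat o1 (stl s1).2).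
Proof.
move=> HL H8 r Hin.
case: (stl_cases s1) => [E|[J [fw [_ [HJ [E _]]]]]]; rewrite E in Hin *.
- move=> Hr Hv.
  have Hin' : List.In r (o_entered o1) by move: Hin; rewrite ocat_ent In_cat => -[].
  case: (H8 r Hin' Hr Hv) => [->|[w [m [Hw Hb]]]]; first by left.
  by right; exists w, m; split => //; rewrite ocat_sends; apply/In_cat; left.
- rewrite e1_rnd => Hr Hv.
  move: Hin; rewrite !ocat_ent !In_cat => -[Hin|[//|]].
  + have := HL _ Hin; rewrite Hr.
    by case: (creating s1) HJ => HJ H'; lia.
  + rewrite e1_ent => -[Hr'|//].
    case: (e1_creat J.+1 (cur s1) s1); first by rewrite Hr'.
    * by left.
    * move=> [w [m [Hw Hb]]]; right; exists w, m; split; last by rewrite Hr.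
      by rewrite !ocat_sends; apply/In_cat; right; apply/In_cat; right.
Qed.

Definition st0 (st : hstate Pos) (m : msg Pos) := HS (rnd st) (cur st) (creating st) (m :: held st).
Definition heldin (st : hstate Pos) (inp : input Pos) :=
  match inp with IRecv m => m :: held st | _ => held st end.

Lemma hs_start st : hs st IStart = enter n f Pos ct rt v 0 genesis st.
Proof. by []. Qed.
Lemma hs_permit st s r p : hs st (IRecv (MPermit s r p)) = aft (cc (st0 st (MPermit s r p))).
Proof. by []. Qed.
Lemma hs_block st r p pf : hs st (IRecv (MBlock r p pf)) =
  if valid_block n f pf && trigger Pos st r
  then enter n f Pos ct rt v r.+1 (blk_pos r p pf) (st0 st (MBlock r p pf))
  else stl (st0 st (MBlock r p pf)).
Proof. by []. Qed.
Lemma hs_prop st r p ps : hs st (IRecv (MProposal r p ps)) =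
  if valid_prop n f Pos ps && trigger Pos st r
  then enter n f Pos ct rt v r.+1 p (st0 st (MProposal r p ps))
  else stl (st0 st (MProposal r p ps)).
Proof. by []. Qed.
Lemma hs_to st s r : hs st (IRecv (MTimeout s r)) = stl (st0 st (MTimeout s r)).
Proof. by []. Qed.
Lemma hs_fc st r : hs st (IFire (TCreator r)) =
  if creating st && (r == rnd st) then
    aft (HS (rnd st) (cur st) false (held st),
         Out (if (quorum f <= size (all_signers n Pos (rnd st) (held st)))%N
              then bcast n Pos (MProposal (rnd st) (prop_pos (cur st) (permits_r n Pos (rnd st) (held st)))
                                 (permits_r n Pos (rnd st) (held st)))
              else [::]) [::] [::])
  else (st, nout).
Proof. by []. Qed.
Lemma hs_fr st r : hs st (IFire (TRound r)) =
  if r == rnd st then (st, Out (bcast n Pos (MTimeout v r)) [::] [::]) else (st, nout).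
Proof. by []. Qed.

Lemma AS_all s1 o1 H : held s1 = H -> OK H o1 -> EntLe s1 o1 ->
  [/\ held (stl s1).1 = H, OK H (ocat o1 (stl s1).2), EntLe (stl s1).1 (ocat o1 (stl s1).2)
    & rnd s1 <= rnd (stl s1).1].
Proof.
move=> Hh Ho He; split.
- by rewrite stl_held.
- by apply: OK_cat => //; rewrite -Hh; exact: stl_OK.
- exact: AS_EntLe.
- exact: stl_rnd.
Qed.

Lemma e1_EntLe r p st : EntLe (e1 r p st).1 (e1 r p st).2.
Proof. by move=> r'; rewrite e1_ent e1_rnd => -[<-|]. Qed.

Lemma ent_all r p st : let so := enter n f Pos ct rt v r p st in
  [/\ held so.1 = held st, OK (held st) so.2, EntLe so.1 so.2 & r <= rnd so.1].
Proof.
rewrite ent_eq /=.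
case: (AS_all _ _ _ (e1_held r p st) (e1_OK r p st) (e1_EntLe r p st)) => ? ? ? H4; split => //.
by rewrite -{1}(e1_rnd r p st).
Qed.

Lemma stl_all st : let so := stl st in
  [/\ held so.1 = held st, OK (held st) so.2, EntLe so.1 so.2 & rnd st <= rnd so.1].
Proof.
have He : EntLe st nout by [].
case: (AS_all _ _ _ (erefl (held st)) (OK_nout (held st)) He) => H1 H2 H3 H4.
have E : forall o : output Pos, ocat nout o = o by case.
by rewrite E in H2 H3.
Qed.

Lemma hs_basic st inp : (inp = IStart -> rnd st = 0) ->
  let so := hs st inp in
  [/\ held so.1 = heldin st inp, rnd st <= rnd so.1, EntLe so.1 so.2 &
     (OK (heldin st inp) so.2 \/
      (inp = IFire (TRound (rnd st)) /\ so = (st, Out (bcast n Pos (MTimeout v (rnd st))) [::] [::])))].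
Proof.
move=> H0; case: inp H0 => [|m|[r|r]] H0.
- rewrite hs_start; case: (ent_all 0 genesis st) => H1 H2 H3 H4.
  by split => //; [rewrite H0 | left].
- clear H0; case: m => [s r p|r p pf|r p ps|s r].
  + rewrite hs_permit aft_eq'.
    have Hcc := cc_OK (st0 st (MPermit s r p)).
    have Hce : EntLe (cc (st0 st (MPermit s r p))).1 (cc (st0 st (MPermit s r p))).2 by move=> r'; rewrite cc_ent.
    case: (AS_all _ _ _ (cc_held _) Hcc Hce) => H1 H2 H3 H4; split => //; last by left.
    by rewrite cc_rnd in H4.
  + rewrite hs_block; case: ifP => [/andP [_ Ht]|_].
    * case: (ent_all r.+1 (blk_pos r p pf) (st0 st (MBlock r p pf))) => H1 H2 H3 H4; split => //; last by left.
      apply: leq_trans H4; rewrite /trigger /st0 in Ht *; case: (creating st) Ht => /= Ht; lia.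
    * by case: (stl_all (st0 st (MBlock r p pf))) => H1 H2 H3 H4; split => //; left.
  + rewrite hs_prop; case: ifP => [/andP [_ Ht]|_].
    * case: (ent_all r.+1 p (st0 st (MProposal r p ps))) => H1 H2 H3 H4; split => //; last by left.
      apply: leq_trans H4; rewrite /trigger /st0 in Ht *; case: (creating st) Ht => /= Ht; lia.
    * by case: (stl_all (st0 st (MProposal r p ps))) => H1 H2 H3 H4; split => //; left.
  + by rewrite hs_to; case: (stl_all (st0 st (MTimeout s r))) => H1 H2 H3 H4; split => //; left.
- rewrite hs_fc; case: ifP => _; last by split => //; left; exact: OK_nout.
  rewrite aft_eq /=.
  set s1 := HS _ _ _ _; set o1 := Out _ _ _.
  have Ho1 : OK (held st) o1.
    split; [|split] => //= w m; case: ifP => // _ /In_bcast ->.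
    right; right; left; do 3 eexists; split; first reflexivity.
    by case=> s p /permits_rP [].
  have He : EntLe s1 o1 by rewrite /o1 /EntLe /=.
  case: (AS_all _ _ _ (erefl (held s1)) Ho1 He) => H1 H2 H3 H4.
  by split => //; left.
- rewrite hs_fr; case: ifP => [/eqP Er|_]; last by split => //; left; exact: OK_nout.
  by split => //; right; rewrite Er.
Qed.

Section RndLe.
Variables (hon : nat -> bool) (i : nat).
Hypothesis Hpig : Pig hon.

Lemma ent_rnd_le r p st :
  (forall s J, List.In (MTimeout s J) (held st) -> hon s -> J < i) -> r <= i ->
  rnd (enter n f Pos ct rt v r p st).1 <= i.
Proof.
move=> HT Hr.
have -> : (enter n f Pos ct rt v r p st).1 = (stl (e1 r p st).1).1 by rewrite ent_eq.
apply: (stl_rnd_le _ _ _ Hpig).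
- by rewrite e1_held.
- by rewrite e1_rnd.
Qed.

Lemma hs_rnd_le st inp : rnd st <= i ->
  (forall s J, List.In (MTimeout s J) (heldin st inp) -> hon s -> J < i) ->
  (forall r p pf s, List.In (MBlock r p pf) (heldin st inp) -> s \in pf -> hon s -> r < i) ->
  (forall r p ps x, List.In (MProposal r p ps) (heldin st inp) -> x \in ps -> hon x.1 -> r < i) ->
  rnd (hs st inp).1 <= i.
Proof.
move=> Hr HT HB HP; case: inp HT HB HP => [|m|[r|r]] HT HB HP.
- by rewrite hs_start; apply: ent_rnd_le.
- case: m HT HB HP => [s r p|r p pf|r p ps|s r] HT HB HP.
  + rewrite hs_permit aft_eq'; apply: (stl_rnd_le _ _ _ Hpig).
    * by rewrite cc_held.
    * by rewrite cc_rnd.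
  + rewrite hs_block; case: ifP => [/andP [Hv _]|_]; last by apply: (stl_rnd_le _ _ _ Hpig).
    apply: ent_rnd_le => //.
    case/and3P: Hv => Hu /eqP Hs Ha.
    have [s Hs1 Hs2] := Hpig _ Hu Ha (eq_leq (esym Hs)).
    exact: HB (or_introl erefl) Hs1 Hs2.
  + rewrite hs_prop; case: ifP => [/andP [Hv _]|_]; last by apply: (stl_rnd_le _ _ _ Hpig).
    apply: ent_rnd_le => //.
    have Ha : all (fun s => s < n) (undup [seq x.1 | x <- ps & x.1 < n]).
      by apply/allP => s; rewrite mem_undup => /mapP [x]; rewrite mem_filter => /andP [? _] ->.
    have [s Hs1 Hs2] := Hpig _ (undup_uniq _) Ha Hv.
    move: Hs1; rewrite mem_undup => /mapP [x]; rewrite mem_filter => /andP [_ Hx] Ex.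
    by apply: HP (or_introl erefl) Hx _; rewrite -Ex.
  + by rewrite hs_to; apply: (stl_rnd_le _ _ _ Hpig).
- rewrite hs_fc; case: ifP => _ //; rewrite aft_eq; exact: (stl_rnd_le _ _ _ Hpig).
- by rewrite hs_fr; case: ifP.
Qed.

End RndLe.

Lemma e1_Ent8 r p st : Ent8 (e1 r p st).1 (e1 r p st).2.
Proof.
move=> r'; rewrite e1_ent e1_rnd => -[<-|//] _ Hv.
exact: e1_creat.
Qed.

Lemma nout_eq (o : output Pos) : ocat nout o = o.
Proof. by case: o. Qed.

Lemma stl_Ent8 st : Ent8 (stl st).1 (stl st).2.
Proof.
have He : EntLe st nout by [].
have H8 : Ent8 st nout by [].
by have := AS_Ent8 _ _ He H8; rewrite nout_eq.
Qed.

Lemma hs_entry st inp : Ent8 (hs st inp).1 (hs st inp).2.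
Proof.
case: inp => [|m|[r|r]].
- rewrite hs_start ent_eq; apply: AS_Ent8; [exact: e1_EntLe | exact: e1_Ent8].
- case: m => [s r p|r p pf|r p ps|s r].
  + rewrite hs_permit aft_eq'; apply: AS_Ent8; by move=> r'; rewrite cc_ent.
  + rewrite hs_block; case: ifP => _; last exact: stl_Ent8.
    rewrite ent_eq; apply: AS_Ent8; [exact: e1_EntLe | exact: e1_Ent8].
  + rewrite hs_prop; case: ifP => _; last exact: stl_Ent8.
    rewrite ent_eq; apply: AS_Ent8; [exact: e1_EntLe | exact: e1_Ent8].
  + rewrite hs_to; exact: stl_Ent8.
- rewrite hs_fc; case: ifP => _; last by move=> r' [].
  by rewrite aft_eq; apply: AS_Ent8; move=> r' [].
- by rewrite hs_fr; case: ifP => _ r' [].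
Qed.

Lemma stl_stay s : creating s ->
  (rnd (stl s).1 = rnd s /\ creating (stl s).1) \/ rnd s < rnd (stl s).1.
Proof.
move=> Hc; case: (stl_cases s) => [->|[J [fw [_ [HJ [-> _]]]]]]; first by left.
by right; rewrite /= e1_rnd; rewrite Hc in HJ; lia.
Qed.

Lemma hs_stay st inp i : rnd st = i -> creating st -> inp <> IStart -> inp <> IFire (TCreator i) ->
  (rnd (hs st inp).1 = i /\ creating (hs st inp).1) \/ i < rnd (hs st inp).1 \/
  exists w m, List.In (w, m) (o_sends (hs st inp).2) /\ is_bp_of Pos i m.
Proof.
move=> Hr Hc H1 H2; case: inp H1 H2 => [|m|[r|r]] H1 H2 //.
- have Hst0 : forall m, creating (st0 st m) by move=> m'; exact: Hc.
  have Hst0r : forall m, rnd (st0 st m) = i by [].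
  clear H1 H2; case: m => [s r p|r p pf|r p ps|s r].
  + rewrite hs_permit aft_eq'.
    case: (cc_cases (st0 st (MPermit s r p))) => [E|[_ [_ [w [m [Hw Hb]]]]]].
    * rewrite E /=; case: (stl_stay _ (Hst0 (MPermit s r p))) => [[-> ->]|H]; first by left; split => //; rewrite -Hr.
      by right; left; rewrite -Hr.
    * right; right; exists w, m; split; last by rewrite -Hr.
      by apply/In_cat; left.
  + rewrite hs_block; case: ifP => [/andP [_ Ht]|_].
    * case: (ent_all r.+1 (blk_pos r p pf) (st0 st (MBlock r p pf))) => _ _ _ H4.
      right; left; rewrite /trigger Hc Hr in Ht; lia.
    * case: (stl_stay _ (Hst0 (MBlock r p pf))) => [[-> ->]|H]; by [left; split => //; rewrite -Hr | right; left; rewrite -Hr].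
  + rewrite hs_prop; case: ifP => [/andP [_ Ht]|_].
    * case: (ent_all r.+1 p (st0 st (MProposal r p ps))) => _ _ _ H4.
      right; left; rewrite /trigger Hc Hr in Ht; lia.
    * case: (stl_stay _ (Hst0 (MProposal r p ps))) => [[-> ->]|H]; by [left; split => //; rewrite -Hr | right; left; rewrite -Hr].
  + rewrite hs_to; case: (stl_stay _ (Hst0 (MTimeout s r))) => [[-> ->]|H]; by [left; split => //; rewrite -Hr | right; left; rewrite -Hr].
- rewrite hs_fc Hc /= Hr; case: eqP => [Er|_]; first by rewrite Er in H2.
  by left.
- by rewrite hs_fr; case: ifP => _; left.
Qed.

Lemma hs_fire st : creating st ->
  quorum f <= size (all_signers n Pos (rnd st) (held st)) ->
  exists w m, List.In (w, m) (o_sends (hs st (IFire (TCreator (rnd st)))).2) /\ is_bp_of Pos (rnd st) m.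
Proof.
move=> Hc Hq; rewrite hs_fc; case: ifP => [_|]; last by rewrite Hc eqxx.
rewrite aft_eq ocat_sends Hq.
do 2 eexists; split; first by apply/In_cat; left; apply: bcast_ne.
by rewrite /= eqxx.
Qed.

End Step.

Section Exec.
Variables (n f : nat) (Pos : eqType) (genesis : Pos)
  (blk_pos : nat -> Pos -> seq nat -> Pos)
  (prop_pos : Pos -> seq (nat * Pos) -> Pos)
  (ct rt delta t0 : R) (byz : nat -> bool)
  (ev : nat -> event Pos) (tm : nat -> R).
Local Open Scope R_scope.
Hypothesis n_gt0 : (0 < n)%N.

Local Notation HR v k := (hrun n f Pos genesis blk_pos prop_pos ct rt ev v k).
Local Notation HO v k := (hout n f Pos genesis blk_pos prop_pos ct rt ev v k).
Local Notation HS_ := (hstep n f Pos genesis blk_pos prop_pos ct rt).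

Hypothesis Hstart : forall k, (k < n)%N -> ev k = EStart k /\ tm k = 0.
Hypothesis Hstart2 : forall k v, ev k = EStart v -> (k < n)%N.

Lemma inp_start v e : input_of Pos v e = Some IStart -> e = EStart v.
Proof. by case: e => [w|w m|w t|b w m] //=; case: eqP => // ->. Qed.
Lemma inp_recv v e m : input_of Pos v e = Some (IRecv m) -> e = EDeliver v m.
Proof. by case: e => [w|w m'|w t|b w m'] //=; case: eqP => // -> [->]. Qed.
Lemma inp_fire v e t : input_of Pos v e = Some (IFire t) -> e = EFire v t.
Proof. by case: e => [w|w m'|w t'|b w m'] //=; case: eqP => // -> [->]. Qed.

Lemma stepP v k :
  (input_of Pos v (ev k) = None /\ HR v k.+1 = HR v k /\ HO v k = nout) \/
  (exists inp, input_of Pos v (ev k) = Some inp /\ HR v k.+1 = (HS_ v (HR v k) inp).1 /\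
               HO v k = (HS_ v (HR v k) inp).2).
Proof.
rewrite /hout /=; case: (input_of Pos v (ev k)) => [inp|]; last by left.
by right; exists inp.
Qed.

Lemma pre_init v k : (k <= v)%N -> (v < n)%N -> HR v k = HS 0 genesis false [::].
Proof.
elim: k => [|k IH] Hk Hv //=.
have [E _] := Hstart _ (ltn_trans Hk Hv).
rewrite E /= IH ?(ltnW Hk) //.
by case: eqP => // Ekv; rewrite Ekv ltnn in Hk.
Qed.

Lemma pre0 v k : input_of Pos v (ev k) = Some IStart -> rnd (HR v k) = 0%N.
Proof.
move/inp_start => E.
have Hk := Hstart2 _ _ E.
have [E' _] := Hstart _ Hk.
rewrite E' in E; case: E => Ekv.
by rewrite pre_init // -Ekv.
Qed.

Lemma basic v k inp : input_of Pos v (ev k) = Some inp ->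
  let so := HS_ v (HR v k) inp in
  [/\ held so.1 = heldin Pos (HR v k) inp, (rnd (HR v k) <= rnd so.1)%N, EntLe Pos so.1 so.2 &
     (OK n Pos ct rt v (heldin Pos (HR v k) inp) so.2 \/
      (inp = IFire (TRound (rnd (HR v k))) /\
       so = (HR v k, Out (bcast n Pos (MTimeout v (rnd (HR v k)))) [::] [::])))].
Proof.
move=> Hi; apply: hs_basic => //.
by move=> E; rewrite E in Hi; exact: pre0.
Qed.

Lemma rnd_step v k : (rnd (HR v k) <= rnd (HR v k.+1))%N.
Proof.
case: (stepP v k) => [[_ [-> _]]|[inp [Hi [-> _]]]] //.
by case: (basic _ _ _ Hi).
Qed.

Lemma rnd_mono v j k : (j <= k)%N -> (rnd (HR v j) <= rnd (HR v k))%N.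
Proof.
move=> /subnK <-; elim: (k - j)%N => [|d IH] //.
by rewrite addSn; apply: leq_trans IH (rnd_step _ _).
Qed.

Lemma held_step v k m : List.In m (held (HR v k)) -> List.In m (held (HR v k.+1)).
Proof.
case: (stepP v k) => [[_ [-> _]]|[inp [Hi [-> _]]]] //.
case: (basic _ _ _ Hi) => -> _ _ _.
by case: inp Hi => //= m' _ H; right.
Qed.

Lemma deliv_held w m k j : ev k = EDeliver w m -> (k < j)%N -> List.In m (held (HR w j)).
Proof.
move=> E /subnK <-; elim: (j - k.+1)%N => [|d IH].
- rewrite add0n.
  have Hi : input_of Pos w (ev k) = Some (IRecv m) by rewrite E /= eqxx.
  case: (stepP w k) => [[H _]|[inp [Hi' [-> _]]]]; first by rewrite Hi in H.
  rewrite Hi in Hi'; case: Hi' => <-.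
  by case: (basic _ _ _ Hi) => -> _ _ _ /=; left.
- by rewrite addSn; apply: held_step.
Qed.

Lemma held_deliv v k m : List.In m (held (HR v k)) -> exists2 j, (j < k)%N & ev j = EDeliver v m.
Proof.
elim: k => [|k IH]; first by simpl; case.
case: (stepP v k) => [[_ [-> _]]|[inp [Hi [-> _]]]].
- by move/IH => [j Hj Ej]; exists j => //; apply: ltnW.
- case: (basic _ _ _ Hi) => -> _ _ _.
  case: inp Hi => [|m'|t] Hi /=; try by move/IH => [j Hj Ej]; exists j => //; apply: ltnW.
  case=> [Em|]; last by move/IH => [j Hj Ej]; exists j => //; apply: ltnW.
  by exists k => //; rewrite -Em; apply: inp_recv.
Qed.

Lemma ent_props v k r : List.In r (o_entered (HO v k)) ->
  [/\ (r <= rnd (HR v k.+1))%N, (exists p, List.In (r %% n, MPermit v r p) (o_sends (HO v k))) &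
      (r %% n = v -> List.In (TCreator r, ct) (o_timers (HO v k)))].
Proof.
case: (stepP v k) => [[_ [_ ->]]|[inp [Hi [-> ->]]]] //.
case: (basic _ _ _ Hi) => _ _ HL [[_ [_ HE]]|[_ ->]] // Hr.
by case: (HE _ Hr) => H1 H2; split => //; apply: HL.
Qed.

Lemma tim_props v k t d : List.In (t, d) (o_timers (HO v k)) -> TimOK Pos ct rt (HO v k) t d.
Proof.
case: (stepP v k) => [[_ [_ ->]]|[inp [Hi [_ ->]]]] //.
case: (basic _ _ _ Hi) => _ _ _ [[_ [HT _]]|[_ ->]] //.
exact: HT.
Qed.

Lemma sends_props v k w m : List.In (w, m) (o_sends (HO v k)) ->
  exists inp, input_of Pos v (ev k) = Some inp /\
   (SendOK n Pos v (heldin Pos (HR v k) inp) (HO v k) w m \/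
    (inp = IFire (TRound (rnd (HR v k))) /\ m = MTimeout v (rnd (HR v k)))).
Proof.
case: (stepP v k) => [[_ [_ ->]]|[inp [Hi [_ ->]]]] //.
move=> Hin; exists inp; split => //.
case: (basic _ _ _ Hi) => _ _ _ [[HS _]|[Ei E]]; first by left; apply: HS.
rewrite E /= in Hin.
by right; split => //; apply: (In_bcast _ _ _ _ _ Hin).
Qed.

Hypothesis Htm_mono : forall k, tm k <= tm k.+1.

Lemma tm_mono j k : (j <= k)%N -> tm j <= tm k.
Proof.
move=> /subnK <-; elim: (k - j)%N => [|d IH]; first by rewrite add0n; lra.
rewrite addSn; apply: Rle_trans IH (Htm_mono _).
Qed.

Lemma tm_lt j k : tm j < tm k -> (j < k)%N.
Proof. move=> H; case: (leqP k j) => // /tm_mono; lra. Qed.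

Lemma tm_ge0 k : 0 <= tm k.
Proof. have [_ E] := Hstart _ n_gt0; rewrite -E; apply: tm_mono; lia. Qed.


Local Notation hon := (honest n byz).

Hypothesis Htm_unb : forall T, exists k, T < tm k.
Hypothesis Hdeliv : forall k w m, ev k = EDeliver w m ->
     hon w /\ exists k', (k' < k)%N /\ sends_at n f Pos genesis blk_pos prop_pos ct rt byz ev k' w m.
Hypothesis Hfire : forall k w t, ev k = EFire w t ->
     hon w /\ exists k' d, (k' < k)%N /\ List.In (t, d) (o_timers (HO w k'))
                            /\ ((t0 <= tm k') -> tm k = (tm k' + d)).
Hypothesis Htimer : forall k w t d, hon w -> List.In (t, d) (o_timers (HO w k)) ->
     (t0 <= tm k) ->
     exists k', (k < k')%N /\ ev k' = EFire w t /\ tm k' = (tm k + d).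
Hypothesis Hbound : forall k v w m, hon v -> hon w -> List.In (w, m) (o_sends (HO v k)) ->
     (t0 <= tm k) ->
     exists k', (k < k')%N /\ ev k' = EDeliver w m /\ (tm k' <= tm k + delta).
Hypothesis Hbyz : forall k b w m, ev k = EByz b w m ->
     byzantine n byz b /\ forall a, List.In a (atoms m) -> hon (signer n a) ->
                   knows_before n f Pos genesis blk_pos prop_pos ct rt byz ev k a.
Hypothesis Hcount : count byz (iota 0 n) = f.
Hypothesis Hf : (3 * f < n)%N.
Hypotheses (Hct1 : 2 * delta < ct) (Hct2 : ct < 3 * delta) (Hrt : 5 * delta < rt).
Variables (i : nat) (T : R).
Hypothesis HTs : round_start n f Pos genesis blk_pos prop_pos ct rt byz ev tm i T.
Hypothesis HTt0 : t0 <= T.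
Hypothesis Hall : forall v, hon v -> exists t, T <= t /\ t <= T + delta /\
     starts_exec n f Pos genesis blk_pos prop_pos ct rt ev tm v i t.
Hypothesis Hu : hon (i %% n).
Hypothesis NC : forall k w m, List.In (w, m) (o_sends (HO (i %% n) k)) -> ~~ is_bp_of Pos i m.

Lemma Lpig : Pig n f hon.
Proof.
move=> l Hu' Ha Hq.
case: (boolP (has hon l)) => [/hasP [s Hs Hh]|Hn]; first by exists s.
have Hsub : {subset l <= filter byz (iota 0 n)}.
  move=> x Hx; rewrite mem_filter mem_iota add0n.
  have Hxn : (x < n)%N by move/allP: Ha => /(_ x Hx).
  have Hnh : ~~ hon x by apply: contra Hn => H; apply/hasP; exists x.
  have Hb : byz x by move: Hnh; rewrite /honest Hxn /= negbK.
  by rewrite Hb Hxn.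
have := uniq_leq_size Hu' Hsub; rewrite size_filter Hcount.
rewrite /quorum in Hq => Hs; exfalso; have H := leq_trans Hq Hs; lia.
Qed.

Lemma count_hon : (quorum f <= count hon (iota 0 n))%N.
Proof.
have -> : count hon (iota 0 n) = count (predC byz) (iota 0 n).
  by apply: eq_in_count => x; rewrite mem_iota add0n /honest => /andP [_ ->].
have := count_predC byz (iota 0 n); rewrite Hcount size_iota /quorum; lia.
Qed.

Definition gtb (a b : R) : bool := if Rlt_dec a b then true else false.

Lemma entered_time v k r : hon v -> List.In r (o_entered (HO v k)) -> (i <= r)%N -> T <= tm k.
Proof.
move=> Hv Hr Hir.
case: HTs => _ [_ Hmin]; apply: Hmin; first exact: tm_ge0.
have exP : exists j, gtb (tm k) (tm j).
  case: (Htm_unb (tm k)) => j Hj; exists j; rewrite /gtb; by case: Rlt_dec.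
case: (ex_minnP exP) => k2 H2 Hmin2.
have Hk2 : tm k < tm k2 by move: H2; rewrite /gtb; case: Rlt_dec.
rewrite /rmax_ge; exists v, (rnd (HR v k2)); split => //; split.
- exists k2; split => // j Hj.
  case: (Rle_lt_dec (tm j) (tm k)) => // Hlt.
  have : gtb (tm k) (tm j) by rewrite /gtb; case: Rlt_dec.
  by move/Hmin2; rewrite leqNgt Hj.
- case: (ent_props _ _ _ Hr) => H1 _ _.
  apply: leq_trans Hir (leq_trans H1 _); apply: rnd_mono; exact: (tm_lt _ _ Hk2).
Qed.

Definition Good (w : nat) (m : msg Pos) : Prop :=
  forall a, List.In a (atoms m) -> hon (signer n a) ->
  match a with
  | APermit s r p => (r < i)%N \/ (r = i /\ w = i %% n /\ m = MPermit s r p)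
  | ATimeout s J => (J < i)%N
  | ABlock _ _ _ => True
  end.


Lemma atoms_block_perm r (p : Pos) pf s : s \in pf -> List.In (APermit s r p) (atoms (MBlock r p pf)).
Proof. move=> Hs /=; right; apply/In_map; exists s; split => //; exact/In_memP. Qed.

Lemma atoms_prop_perm r (p : Pos) (ps : seq (nat * Pos)) x : x \in ps -> List.In (APermit x.1 r x.2) (atoms (MProposal r p ps)).
Proof. move=> Hs /=; apply/In_map; exists x; split => //; exact/In_memP. Qed.

Lemma atoms_blockE (a : atom Pos) r p pf : List.In a (atoms (MBlock r p pf)) ->
  a = ABlock r p pf \/ exists s, a = APermit s r p /\ s \in pf.
Proof. move=> /= [<-|/In_map [s [<- Hs]]]; [by left | right; exists s; split => //; exact/In_memP]. Qed.

Lemma atoms_propE (a : atom Pos) r p ps : List.In a (atoms (MProposal r p ps)) ->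
  exists x, a = APermit x.1 r x.2 /\ x \in ps.
Proof. move=> /= /In_map [x [<- Hs]]; exists x; split => //; exact/In_memP. Qed.

Lemma inv k : (forall j, (j < k)%N -> tm j < T + 5 * delta) ->
  (forall v, hon v -> (rnd (HR v k) <= i)%N) /\
  (forall j w m, (j < k)%N -> sends_at n f Pos genesis blk_pos prop_pos ct rt byz ev j w m -> Good w m).
Proof.
elim: k => [|k IH] Hpre; first by split => // v _.
have [HA HB] := IH (fun j Hj => Hpre j (leqW Hj)).
have Hk : tm k < T + 5 * delta := Hpre k (ltnSn k).
have HG : forall v m, hon v -> List.In m (held (HR v k)) -> Good v m.
  move=> v m Hv /held_deliv [j Hj Ej].
  case: (Hdeliv _ _ _ Ej) => _ [k' [Hk' Hs]].
  exact: HB k' v m (ltn_trans Hk' Hj) Hs.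
have HGi : forall v inp m, hon v -> input_of Pos v (ev k) = Some inp ->
    List.In m (heldin Pos (HR v k) inp) -> Good v m.
  move=> v inp m Hv Hi; case: inp Hi => [|m'|t] Hi /=; try exact: HG v m Hv.
  case=> [Em|Hm]; last exact: HG.
  have E := inp_recv _ _ _ Hi.
  case: (Hdeliv _ _ _ E) => _ [k' [Hk' Hs]].
  rewrite -Em; exact: HB _ _ _ Hk' Hs.
have HA' : forall v, hon v -> (rnd (HR v k.+1) <= i)%N.
  move=> v Hv; case: (stepP v k) => [[_ [-> _]]|[inp [Hi [-> _]]]]; first exact: HA.
  apply: (@hs_rnd_le n f Pos genesis blk_pos prop_pos ct rt v hon i Lpig).
  + exact: HA.
  + move=> s J Hin Hs.
    exact: (HGi v inp _ Hv Hi Hin (ATimeout s J) (or_introl erefl) Hs).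
  + move=> r p pf s Hin Hspf Hs.
    by case: (HGi v inp _ Hv Hi Hin (APermit s r p) (atoms_block_perm _ _ _ _ Hspf) Hs) => // -[_ [_ E]].
  + move=> r p ps x Hin Hx Hs.
    by case: (HGi v inp _ Hv Hi Hin _ (atoms_prop_perm _ _ _ _ Hx) Hs) => // -[_ [_ E]].
split => // j w m Hj Hs.
move: Hj; rewrite ltnS leq_eqVlt => /orP [/eqP Ejk|Hj]; last exact: HB _ _ _ Hj Hs.
rewrite Ejk in Hs.
case: Hs => [[v [Hv Hin]]|[b Eb]].
- case: (sends_props _ _ _ _ Hin) => inp [Hi [HSOK|[Ei Em]]].
  + case: HSOK => [[r [p [Em [Ew Hent]]]]|[[r [p [pf [Em Hpf]]]]|[[r [p [ps [Em Hps]]]]|[s [J [Em Hin']]]]]].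
    * move=> a; rewrite Em => -[<-|//] Hs /=.
      case: (ent_props _ _ _ Hent) => Hr _ _.
      have := leq_trans Hr (HA' v Hv); rewrite leq_eqVlt => /orP [/eqP Eri|]; last by left.
      by right; split => //; split => //; rewrite Ew Eri.
    * move=> a; rewrite Em => /atoms_blockE [->|[s [-> Hspf]]] Hs //.
      case: (HGi v inp _ Hv Hi (Hpf s Hspf) (APermit s r p) (or_introl erefl) Hs) => [?|[Er [Ev _]]]; first by left.
      rewrite Ev in Hin; have := NC _ _ _ Hin; by rewrite Em /= Er eqxx.
    * move=> a; rewrite Em => /atoms_propE [x [-> Hx]] Hs.
      case: (HGi v inp _ Hv Hi (Hps x Hx) (APermit x.1 r x.2) (or_introl erefl) Hs) => [?|[Er [Ev _]]]; first by left.
      rewrite Ev in Hin; have := NC _ _ _ Hin; by rewrite Em /= Er eqxx.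
    * move=> a; rewrite Em => -[<-|//] Hs.
      exact: (HGi v inp _ Hv Hi Hin' (ATimeout s J) (or_introl erefl) Hs).
  + move=> a; rewrite Em => -[<-|//] _ /=.
    have := HA v Hv; rewrite leq_eqVlt => /orP [/eqP Er|//]; exfalso.
    rewrite Ei in Hi; have Ef := inp_fire _ _ _ Hi.
    case: (Hfire _ _ _ Ef) => _ [k' [d [Hk' [Htim Htime]]]].
    rewrite Er in Htim.
    case: (tim_props _ _ _ _ Htim) => Ed Hent.
    have HT' := entered_time _ _ _ Hv Hent (leqnn i).
    have := Htime ltac:(lra); lra.
- case: (Hbyz _ _ _ _ Eb) => _ Hkb.
  move=> a Ha Hs.
  case: (Hkb a Ha Hs) => k' [w' [m' [Hk'k [Hw' [Hs' Ha']]]]].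
  have := HB k' w' m' Hk'k Hs' a Ha' Hs.
  case: a {Ha Ha' Hs} => [s r p|r p pf|s J] //=.
  case=> [?|[_ [Ew' _]]]; first by left.
  exfalso; rewrite Ew' in Hw'.
  by move: Hu Hw'; rewrite /honest /byzantine => /andP [_ /negP H] /andP [_ ?].
Qed.


Lemma delta_pos : 0 < delta.
Proof. lra. Qed.

Lemma quorum_at j : T + ct <= tm j ->
  (quorum f <= size (all_signers n Pos i (held (HR (i %% n) j))))%N.
Proof.
move=> Htj.
have Hsub : {subset filter hon (iota 0 n) <= all_signers n Pos i (held (HR (i %% n) j))}.
  move=> v; rewrite mem_filter => /andP [Hv _].
  case: (Hall v Hv) => t [Ht1 [Ht2 [kv [Etv Hent]]]].
  case: (ent_props _ _ _ Hent) => _ [p Hp] _.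
  have Ht0 : t0 <= tm kv by rewrite Etv; lra.
  case: (Hbound _ _ _ _ Hv Hu Hp Ht0) => k' [Hk' [Ek' Htk']].
  have Hlt : (k' < j)%N by apply: tm_lt; lra.
  have Hin := deliv_held _ _ _ _ Ek' Hlt.
  rewrite /all_signers mem_undup; apply/mapP; exists (v, p) => //.
  by apply: permits_rI Hin _; case/andP: Hv.
have := uniq_leq_size (filter_uniq _ (iota_uniq 0 n)) Hsub.
rewrite size_filter; exact: leq_trans count_hon.
Qed.

Lemma fire_time j : ev j = EFire (i %% n) (TCreator i) -> T + ct <= tm j.
Proof.
move=> E; case: (Hfire _ _ _ E) => _ [k' [d [Hk' [Htim Htime]]]].
case: (tim_props _ _ _ _ Htim) => Ed Hent.
have := entered_time _ _ _ Hu Hent (leqnn i) => HT'.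
have := Htime ltac:(lra); lra.
Qed.

Lemma fire_contra j : ev j = EFire (i %% n) (TCreator i) ->
  rnd (HR (i %% n) j) = i -> creating (HR (i %% n) j) -> False.
Proof.
move=> E Er Hc.
have Hi : input_of Pos (i %% n) (ev j) = Some (IFire (TCreator i)) by rewrite E /= eqxx.
case: (stepP (i %% n) j) => [[H _]|[inp [Hi' [_ Ho]]]]; first by rewrite Hi in H.
rewrite Hi in Hi'; case: Hi' => Einp.
have Hq : (quorum f <= size (all_signers n Pos (rnd (HR (i %% n) j)) (held (HR (i %% n) j))))%N.
  by rewrite Er; exact: quorum_at _ (fire_time _ E).
case: (@hs_fire n f Pos genesis blk_pos prop_pos ct rt (i %% n) n_gt0 (HR (i %% n) j) Hc Hq) => w [m [Hw Hb]].
rewrite Er in Hw Hb.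
have := NC j w m; rewrite Ho -Einp => /(_ Hw); by rewrite Hb.
Qed.

Lemma main_false : False.
Proof.
set u := i %% n.
case: (Hall u Hu) => tu [Ht1 [Ht2 [ku [Etu Hent]]]].
case: (ent_props _ _ _ Hent) => Hle _ Htc.
have Htc' := Htc erefl.
have Ht0 : t0 <= tm ku by rewrite Etu; lra.
case: (Htimer _ _ _ _ Hu Htc' Ht0) => kf [Hkf [Ef Etf]].
have Hpre : forall j, (j < kf.+1)%N -> tm j < T + 5 * delta.
  move=> j Hj; have := tm_mono j kf Hj; lra.
have HA : forall j v, (j <= kf.+1)%N -> hon v -> (rnd (HR v j) <= i)%N.
  move=> j v Hj Hv.
  exact: (inv j (fun j' Hj' => Hpre j' (leq_trans Hj' Hj))).1 v Hv.
have Hpost : rnd (HR u ku.+1) = i /\ creating (HR u ku.+1).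
  have Er : rnd (HR u ku.+1) = i.
    by apply/eqP; rewrite eqn_leq Hle HA // ltnW.
  split => //.
  case: (stepP u ku) => [[_ [_ Ho]]|[inp [Hi [Hst Ho]]]]; first by rewrite Ho in Hent.
  rewrite Ho in Hent; rewrite Hst in Er *.
  case: (@hs_entry n f Pos genesis blk_pos prop_pos ct rt u n_gt0 (HR u ku) inp i Hent (esym Er) erefl) => // -[w [m [Hw Hb]]].
  by have := NC ku w m; rewrite Ho => /(_ Hw); rewrite Hb.
have Hclaim : forall d, (ku.+1 + d <= kf)%N -> rnd (HR u (ku.+1 + d)) = i /\ creating (HR u (ku.+1 + d)).
  elim => [|d IHd] Hd; first by rewrite addn0.
  have Hd' : (ku.+1 + d <= kf)%N by move: Hd; rewrite addnS; apply: ltnW.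
  have [Er Hc] := IHd Hd'.
  move: Hd; rewrite addnS => Hd.
  set j := (ku.+1 + d)%N in Er Hc Hd *.
  case: (stepP u j) => [[_ [-> _]]|[inp [Hi [Hst Ho]]]]; first by [].
  have Hgen : inp <> IStart -> inp <> IFire (TCreator i) ->
     rnd (HR u j.+1) = i /\ creating (HR u j.+1).
    move=> H1 H2; rewrite Hst.
    case: (@hs_stay n f Pos genesis blk_pos prop_pos ct rt u n_gt0 (HR u j) inp i Er Hc H1 H2) => [//|[Hlt|[w [m [Hw Hb]]]]].
    - have := HA j.+1 u (leqW Hd) Hu; rewrite Hst => ?; exfalso; lia.
    - by exfalso; have := NC j w m; rewrite Ho => /(_ Hw); rewrite Hb.
  case: inp Hi Hst Ho Hgen => [|m|[r|r]] Hi Hst Ho Hgen; try by apply: Hgen.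
  + exfalso; have E := inp_start _ _ Hi.
    have Hj := Hstart2 _ _ E; have [E' _] := Hstart _ Hj.
    rewrite E' in E; case: E => Eju.
    by rewrite pre_init -?Eju // in Hc.
  + case: (eqVneq r i) => [Eri|Neq]; last by apply: Hgen => // -[Eq]; rewrite Eq eqxx in Neq.
    exfalso; rewrite Eri in Hi; exact: fire_contra _ (inp_fire _ _ _ Hi) Er Hc.
have Hkk : (ku.+1 + (kf - ku.+1) <= kf)%N by rewrite subnKC.
have [Er Hc] := Hclaim (kf - ku.+1)%N Hkk.
rewrite subnKC // in Er Hc.
exact: fire_contra _ Ef Er Hc.
Qed.

End Exec.
Local Open Scope R_scope.

Theorem lemma10 (n f : nat) (Pos : eqType) (genesis : Pos)
  (blk_pos : nat -> Pos -> seq nat -> Pos)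
  (prop_pos : Pos -> seq (nat * Pos) -> Pos)
  (ct rt delta t0 : R) (byz : nat -> bool)
  (ev : nat -> event Pos) (tm : nat -> R) (i : nat) :
  (3 * f < n)%N ->
  count byz (iota 0 n) = f ->
  2 * delta < ct -> ct < 3 * delta -> 5 * delta < rt ->
  valid_exec n f Pos genesis blk_pos prop_pos ct rt byz delta t0 ev tm ->
  (* round i takes place during the synchronous phase starting at t0 *)
  (forall T, round_start n f Pos genesis blk_pos prop_pos ct rt byz ev tm i T ->
     t0 <= T) ->
  unified n f Pos genesis blk_pos prop_pos ct rt byz delta ev tm i ->
  honest n byz (i %% n) ->
  creates_or_proposes n f Pos genesis blk_pos prop_pos ct rt ev (i %% n) i.
Proof.
move=> Hf Hcount Hct1 Hct2 Hrt Hval Hsync Hun Hu.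
case: (classic (creates_or_proposes n f Pos genesis blk_pos prop_pos ct rt ev (i %% n) i)) => // Hnc.
exfalso.
have NC : forall k w m, List.In (w, m) (o_sends (hout n f Pos genesis blk_pos prop_pos ct rt ev (i %% n) k)) ->
    ~~ is_bp_of Pos i m.
  by move=> k w m Hin; apply/negP => Hb; apply: Hnc; exists k, w, m.
have n_gt0 : (0 < n)%N.
  by move: Hu; rewrite /honest => /andP [H _]; apply: leq_ltn_trans H.
case: Hun => T [HTs Hall].
have HTt0 := Hsync T HTs.
case: Hval => [Hmono [Hunb [Hst [Hst2 [Hdel [Hfi [Htim [Hbd Hbz]]]]]]]].
refine (@main_false n f Pos genesis blk_pos prop_pos ct rt delta t0 byz ev tm n_gt0 Hst Hst2 Hmono Hunb Hdel Hfi Htim Hbd Hbz Hcount Hf Hct1 Hct2 Hrt i T HTs HTt0 _ Hu NC).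
exact Hall.
Qed.
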